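(* Let $n$ be even and $F\colon\mathbb F_2^n\to\mathbb F_2^n$ a quadratic function. Assume $N_F\cup\{0\}$ contains two subspaces $V,W\le\mathbb F_2^n$ with $V\oplus W=\mathbb F_2^n$. Then $|N_F|\ge 3\cdot(2^{n/2}-1)$. Furthermore, $N_F$ is a $3$-fold blocking set of $\mathrm{PG}(n-1,2)$ with respect to $(n/2)$-spaces, i.e. every subspace $U\le\mathbb F_2^n$ with $\dim U=\frac n2+1$ satisfies $|U\cap N_F|\ge3$.
   Context: $\langle\cdot,\cdot\rangle$ is the standard dot product; $F_b(x)=\langle b,F(x)\rangle$. $F$ is quadratic if each $F_b$ is a quadratic form plus an affine function. $F_b$ is bent if $|\sum_x(-1)^{F_b(x)+\langle x,a\rangle}|=2^{n/2}$ for all $a$. $N_F=\{b\in\mathbb F_2^n\setminus\{0\}\colon F_b\text{ not bent}\}$. $\mathrm{PG}(n-1,2)$ is identified with $\mathbb F_2^n\setminus\{0\}$; an $(n/2)$-space is $U\setminus\{0\}$ for a subspace $U$ of dimension $n/2+1$. *)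

(* Defs.v *)
(* Vectors of F_2^n are row vectors 'rV['F_2]_n;
   subspaces are row spaces of square matrices (mxalgebra). *)
From HB Require Import structures.
From mathcomp Require Import all_boot all_order all_algebra.
Set Implicit Arguments. Unset Strict Implicit. Unset Printing Implicit Defensive.
Import GRing.Theory Num.Theory.
Local Open Scope ring_scope.

Definition dot (n : nat) (u v : 'rV['F_2]_n) : 'F_2 := (u *m v^T) 0 0.

Definition compF (n : nat) (F : 'rV['F_2]_n -> 'rV['F_2]_n) (b x : 'rV['F_2]_n) : 'F_2 :=
  dot b (F x).

Definition qform (n : nat) (A : 'M['F_2]_n) (x : 'rV['F_2]_n) : 'F_2 :=
  (x *m A *m x^T) 0 0.

Definition quadratic_fun (n : nat) (F : 'rV['F_2]_n -> 'rV['F_2]_n) : Prop :=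
  forall b : 'rV['F_2]_n, exists (A : 'M['F_2]_n) (c : 'rV['F_2]_n) (d : 'F_2),
    forall x, compF F b x = qform A x + dot c x + d.

Definition walsh (n : nat) (f : 'rV['F_2]_n -> 'F_2) (a : 'rV['F_2]_n) : int :=
  \sum_(x : 'rV['F_2]_n) (-1) ^+ (nat_of_ord (f x + dot x a)).

Definition bent (n : nat) (f : 'rV['F_2]_n -> 'F_2) : bool :=
  [forall a : 'rV['F_2]_n, `|walsh f a| == (2 ^ n./2)%:R].

Definition NF (n : nat) (F : 'rV['F_2]_n -> 'rV['F_2]_n) : {set 'rV['F_2]_n} :=
  [set b | (b != 0) && ~~ bent (compF F b)].

Definition vecs (n : nat) (U : 'M['F_2]_n) : {set 'rV['F_2]_n} :=
  [set u | (u <= U)%MS].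

(* Main.v *)
Require Import Defs.
From HB Require Import structures.
From mathcomp Require Import all_boot all_order all_algebra.
From mathcomp Require Import fingroup perm.
From mathcomp Require Import zify.
Set Implicit Arguments. Unset Strict Implicit. Unset Printing Implicit Defensive.
Import GRing.Theory Num.Theory.
Local Open Scope ring_scope.

Lemma F2_cases (t : 'F_2) : t = 0 \/ t = 1.
Proof. by case: t => [[|[|]]] //= ?; [left|right]; apply/val_inj. Qed.
Lemma F2_addxx (t : 'F_2) : t + t = 0.
Proof. by case: (F2_cases t) => ->; apply/val_inj. Qed.

Lemma addxx_mx p q (x : 'M['F_2]_(p, q)) : x + x = 0.
Proof. by apply/matrixP => i j; rewrite !mxE F2_addxx. Qed.

Lemma sum_invol (T : finType) (f : T -> T) (g : T -> 'F_2) (A : {set T}) :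
  involutive f -> (forall x, x \in A -> f x \in A) ->
  (forall x, x \in A -> g (f x) = g x) ->
  \sum_(x in A) g x = \sum_(x in A | f x == x) g x.
Proof.
move=> fK.
have [k lek] := ubnP #|A|; elim: k A lek => // k IH A leA Af gf.
case: (pickP [pred x in A | f x != x]) => [x /andP[xA nx] | none]; last first.
  apply: eq_bigl => y; case yA: (y \in A) => //=.
  by have := none y; rewrite /= yA /= => /negbFE ->.
have fxA := Af x xA.
have nx' : f x != x by [].
rewrite (bigD1 x xA) (@bigD1 _ _ _ _ (f x)) /=; last by apply/andP.
rewrite gf // addrA F2_addxx add0r.
set A' := A :\: [set x; f x].
have sub' : (#|A'| < k)%N.
  have h : (#|A'| < #|A|)%N.
    apply: proper_card; apply/properP; split; first exact: subsetDl.
    by exists x => //; rewrite !inE eqxx.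
  by rewrite ltnS in leA; apply: leq_trans h leA.
have -> : \sum_(i | (i \in A) && (i != x) && (i != f x)) g i = \sum_(i in A') g i.
  apply: eq_bigl => y; rewrite !inE negb_or.
  by case: (y \in A); rewrite ?andbT ?andbF.
rewrite IH //; last first.
- by move=> y; rewrite !inE => /andP[_ yA]; rewrite gf.
- move=> y; rewrite !inE => /andP[nxy yA]; rewrite Af // andbT.
  apply/negP => /orP[/eqP e|/eqP e].
    by move: nxy; rewrite -e fK eqxx orbT.
  by move: nxy; rewrite -(fK y) e fK eqxx.
apply: eq_bigl => y; rewrite !inE; case yA: (y \in A) => /=; last by rewrite andbF.
case fy: (f y == y); rewrite ?andbF ?andbT //.
apply/negP => /orP[/eqP e|/eqP e]; move: fy.
  by rewrite e (negbTE nx).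
by rewrite e fK eq_sym (negbTE nx).
Qed.

Definition sgn (t : 'F_2) : int := (-1) ^+ (nat_of_ord t).
Lemma sgnD t u : sgn (t + u) = sgn t * sgn u.
Proof. by case: (F2_cases t) => ->; case: (F2_cases u) => ->. Qed.
Lemma sgn_eq0 t : (sgn t == 0) = false.
Proof. by case: (F2_cases t) => ->. Qed.

Section Dot.
Variable n : nat.
Implicit Types x y v : 'rV['F_2]_n.
Lemma dotDl x y v : dot (x + y) v = dot x v + dot y v.
Proof. by rewrite /dot mulmxDl mxE. Qed.
Lemma dotDr v x y : dot v (x + y) = dot v x + dot v y.
Proof. by rewrite /dot raddfD mulmxDr mxE. Qed.
Lemma dotC x y : dot x y = dot y x.
Proof. by rewrite /dot -[x *m y^T]trmxK trmx_mul trmxK [in LHS]mxE. Qed.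
Lemma dot0l v : dot 0 v = 0.
Proof. by rewrite /dot mul0mx mxE. Qed.
Lemma dot0r v : dot v 0 = 0.
Proof. by rewrite dotC dot0l. Qed.
Lemma dot_delta i v : dot (delta_mx 0 i) v = v 0 i.
Proof. by rewrite /dot -rowE !mxE. Qed.

Lemma card_rV : #|{: 'rV['F_2]_n}| = (2 ^ n)%N.
Proof. by rewrite card_mx card_Fp // mul1n. Qed.

Lemma char_sum v :
  \sum_(x : 'rV['F_2]_n) sgn (dot x v) = if v == 0 then (2 ^ n)%:R else 0.
Proof.
case: eqP => [-> | /eqP nz].
  under eq_bigr do rewrite dot0r.
  by rewrite sumr_const card_rV.
have [i vi] : exists i, v 0 i != 0.
  apply/existsP; apply: contraR nz => /existsPn h; apply/eqP/matrixP => a j.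
  by rewrite (ord1 a) mxE; apply/eqP; move: (h j); rewrite negbK.
have vi1 : v 0 i = 1 by case: (F2_cases (v 0 i)) vi => ->.
set S := (X in X = _).
have : S = - S.
  rewrite {1}/S (reindex_inj (addIr (delta_mx 0 i))) /= /S -sumrN.
  apply: eq_bigr => x _; rewrite dotDl dot_delta vi1 sgnD.
  by rewrite /sgn expr1 mulrN1.
move/eqP; rewrite -subr_eq0 opprK -mulr2n -mulr_natr mulf_eq0 /= => /orP[/eqP //|].
by [].
Qed.
End Dot.

Ltac f2_solve := repeat match goal with
  | |- context [?t] => lazymatch type of t with 'F_2 => is_var t; case: (F2_cases t) => -> ; clear t end
  end.

Section Walsh.
Variables (n : nat) (f : 'rV['F_2]_n -> 'F_2) (M : 'M['F_2]_n).
Hypothesis hD : forall x y, f (x + y) + f x + f y + f 0 = (x *m M *m y^T) 0 0.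

Lemma walshE a : walsh f a = \sum_x sgn (f x + dot x a).
Proof. by []. Qed.

Lemma walsh_sq a : walsh f a ^+ 2 =
  (2 ^ n)%:R * \sum_(z | z *m M^T == 0) sgn (f z + f 0 + dot z a).
Proof.
rewrite expr2 walshE big_distrlr /=.
transitivity (\sum_(x : 'rV_n) \sum_(z : 'rV_n)
   sgn ((x *m M *m z^T) 0 0) * sgn (f z + f 0 + dot z a)).
  apply: eq_bigr => x _; rewrite (reindex_inj (addrI x)) /=; apply: eq_bigr => z _.
  rewrite -!sgnD; congr sgn; rewrite -hD dotDl.
  move: (f x) (dot x a) (f (x+z)) (dot z a) (f z) (f 0) => p q r s t u.
  case: (F2_cases p) => ->; case: (F2_cases q) => ->; case: (F2_cases r) => ->;
  case: (F2_cases s) => ->; case: (F2_cases t) => ->; case: (F2_cases u) => ->;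
  by apply/val_inj.
rewrite exchange_big /= mulr_sumr [RHS]big_mkcond /=; apply: eq_bigr => z _.
rewrite -mulr_suml.
have -> : \sum_(x : 'rV_n) sgn ((x *m M *m z^T) 0 0) = \sum_(x : 'rV_n) sgn (dot x (z *m M^T)).
  by apply: eq_bigr => x _; rewrite /dot trmx_mul trmxK mulmxA.
by rewrite char_sum; case: eqP => _; rewrite ?mul0r.
Qed.


Lemma bent_det : ~~ odd n -> bent f = (\det M != 0).
Proof.
move=> hn; set m := n./2.
have e2 : (2 ^ n)%:R = ((2 ^ m)%:R) ^+ 2 :> int.
  by rewrite -natrX -expnM muln2 -{1}(odd_double_half n) (negbTE hn) add0n.
have n0 : (2 ^ n)%:R != 0 :> int by rewrite pnatr_eq0 expn_eq0.
apply/idP/idP.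
  move/forallP => hb; apply/negP => /eqP d0.
  have : \det M^T == 0 by rewrite det_tr d0.
  case/det0P => z0 nz0 hz0.
  have S1 : forall a, \sum_(z | z *m M^T == 0) sgn (f z + f 0 + dot z a) = 1.
    move=> a; apply: (mulfI n0); rewrite mulr1 -walsh_sq.
    by rewrite -(real_normK (num_real _)) (eqP (hb a)) e2.
  have T1 : \sum_a sgn (dot a z0) *
      (\sum_(z | z *m M^T == 0) sgn (f z + f 0 + dot z a)) = 0.
    under eq_bigr do rewrite S1 mulr1.
    by rewrite char_sum (negbTE nz0).
  have T2 : \sum_a sgn (dot a z0) *
      (\sum_(z | z *m M^T == 0) sgn (f z + f 0 + dot z a)) =
      (2 ^ n)%:R * sgn (f z0 + f 0).
    under eq_bigr do rewrite mulr_sumr.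
    rewrite exchange_big /=.
    transitivity (\sum_(z | z *m M^T == 0) sgn (f z + f 0) *
                    \sum_a sgn (dot a (z + z0))).
      apply: eq_bigr => z _; rewrite mulr_sumr; apply: eq_bigr => a _.
      rewrite dotDr (dotC z a) -!sgnD; congr sgn.
      move: (f z) (f 0) (dot a z) (dot a z0) => p q r s.
      case: (F2_cases p) => ->; case: (F2_cases q) => ->; case: (F2_cases r) => ->;
      case: (F2_cases s) => ->; by apply/val_inj.
    under eq_bigr do rewrite char_sum.
    rewrite (bigD1 z0); last by rewrite hz0.
    rewrite addxx_mx eqxx big1 /=; first by rewrite addr0 mulrC.
    move=> z /andP[_ nz].
    case: (z + z0 =P 0) => [ez0|_]; last by rewrite mulr0.
    have ez : z = z0 by rewrite -[z]addr0 -(addxx_mx z0) addrA ez0 add0r.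
    by rewrite ez eqxx in nz.
  by move: T1; rewrite T2 => /eqP; rewrite mulf_eq0 (negbTE n0) sgn_eq0.
move=> dn; apply/forallP => a.
have K0 : forall z : 'rV['F_2]_n, (z *m M^T == 0) = (z == 0).
  move=> z; apply/idP/idP => [/eqP h|/eqP ->]; last by rewrite mul0mx.
  have u : M^T \in unitmx by rewrite unitmxE det_tr unitfE.
  by rewrite -(mulmxK u z) h mul0mx.
have := walsh_sq a; rewrite (eq_bigl _ _ K0) big_pred1_eq dot0l F2_addxx addr0.
rewrite mulr1 e2 => h.
rewrite -(eqrXn2 (n:=2)) // ?normr_ge0 ?ler0n // real_normK ?num_real //.
by rewrite h.
Qed.
End Walsh.

Definition vecsG n p (U : 'M['F_2]_(p, n)) : {set 'rV['F_2]_n} := [set u | (u <= U)%MS].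

Lemma card_vecsG n p (U : 'M['F_2]_(p, n)) : #|vecsG U| = (2 ^ \rank U)%N.
Proof.
have -> : vecsG U = [set v *m row_base U | v in 'rV_(\rank U)].
  have rb : (row_base U <= U)%MS by rewrite eq_row_base.
  have rb' : (U <= row_base U)%MS by rewrite eq_row_base.
  apply/setP => u; rewrite inE; apply/idP/imsetP.
    by move=> /submx_trans /(_ rb') /submxP [v ->]; exists v.
  by case=> v _ ->; apply: submx_trans rb; rewrite submxMl.
rewrite card_imset ?card_mx ?card_Fp ?mul1n //.
exact: row_free_inj (row_base_free U).
Qed.

Section Parity.
Variables (n : nat) (Mf : 'rV['F_2]_n -> 'M['F_2]_n).
Hypothesis MfD : forall b b', Mf (b + b') = Mf b + Mf b'.
Hypothesis Mf_sym : forall b i j, Mf b i j = Mf b j i.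
Hypothesis Mf_diag : forall b i, Mf b i i = 0.

Lemma F2_m1 : (-1 : 'F_2) = 1.
Proof. by apply/val_inj. Qed.

Lemma fpf_kernel p (U : 'M['F_2]_(p, n)) (s : 'S_n) :
  (n./2 < \rank U)%N -> (s^-1)%g = s -> (forall i, s i != i) ->
  exists2 u, (u \in vecsG U) && (u != 0) & forall i, Mf u i (s i) = 0.
Proof.
move=> rU sinv fpf.
have ss : forall i, s (s i) = i.
  by move=> i; rewrite -{1}sinv permK.
pose R := [set i : 'I_n | (i < s i)%N].
have sR : forall i, i \notin R -> s i \in R.
  move=> i; rewrite !inE -leqNgt => h; rewrite ss ltn_neqAle h andbT.
  by apply: contraNneq (fpf i) => /val_inj ->.
have cR : #|R| = n./2.
  have e : s @: R = ~: R.
    apply/eqP; rewrite eqEsubset; apply/andP; split.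
      apply/subsetP => j /imsetP [i iR ->]; rewrite inE; apply/negP => h.
      by move: iR h; rewrite !inE ss => a b; move: (ltn_trans a b); rewrite ltnn.
    apply/subsetP => j; rewrite inE => /sR h; apply/imsetP; exists (s j) => //.
  have := cardsC R; rewrite -e card_imset; last exact: perm_inj.
  by rewrite card_ord addnn => e2; have := doubleK #|R|; rewrite e2.
pose h (b : 'rV['F_2]_n) : 'rV['F_2]_#|R| := \row_(j < #|R|) Mf b (enum_val j) (s (enum_val j)).
have : [exists b1 in vecsG U, exists b2 in vecsG U, (h b1 == h b2) && (b1 != b2)].
  apply: contraT => hn.
  have inj : {in vecsG U &, injective h}.
    move=> b1 b2 b1U b2U e; apply/eqP; apply: contraR hn => ne.
    apply/exists_inP; exists b1 => //; apply/exists_inP; exists b2 => //.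
    by rewrite e eqxx ne.
  have := leq_card_in _ _ inj; rewrite card_vecsG card_mx card_Fp // mul1n cR.
  by rewrite leqNgt ltn_exp2l // rU.
case/exists_inP => b1 b1U /exists_inP [b2 b2U /andP[/eqP hb nb]].
exists (b1 + b2).
  apply/andP; split.
    by move: b1U b2U; rewrite !inE => ??; rewrite addmx_sub.
  apply: contra nb => /eqP e.
  by apply/eqP; rewrite -[b1]addr0 -(addxx_mx b2) addrA e add0r.
have kR : forall i, i \in R -> Mf (b1 + b2) i (s i) = 0.
  move=> i iR; rewrite MfD mxE.
  have := congr1 (fun v : 'rV['F_2]_#|R| => v 0 (enum_rank_in iR i)) hb; rewrite !mxE enum_rankK_in //.
  by move=> ->; rewrite F2_addxx.
move=> i; case iR: (i \in R); first exact: kR.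
by rewrite Mf_sym; have := kR (s i) (sR i (negbT iR)); rewrite ss.
Qed.

Lemma parity p (U : 'M['F_2]_(p, n)) :
  (n./2 < \rank U)%N -> \sum_(b in vecsG U) \det (Mf b) = 0.
Proof.
move=> rU.
transitivity (\sum_(b in vecsG U) \sum_(s : 'S_n) \prod_i Mf b i (s i)).
  apply: eq_bigr => b _; rewrite /determinant; apply: eq_bigr => s _.
  by rewrite F2_m1 expr1n mul1r.
rewrite exchange_big /=.
pose G (s : 'S_n) := \sum_(b in vecsG U) \prod_i Mf b i (s i).
have GV : forall s, G (s^-1)%g = G s.
  move=> s; apply: eq_bigr => b _; rewrite (reindex_inj (@perm_inj _ s)) /=.
  by apply: eq_bigr => i _; rewrite permK Mf_sym.
have -> : \sum_(s : 'S_n) G s = \sum_(s in [set: 'S_n]) G s.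
  by apply: eq_bigl => s; rewrite inE.
rewrite (@sum_invol _ (fun s => (s^-1)%g)) //; last exact: invgK.
apply: big1 => s /andP[_ /eqP inv].
case: (pickP (fun i => s i == i)) => [i /eqP fi | nf].
  by apply: big1 => b _; rewrite (bigD1 i) //= fi Mf_diag mul0r.
have fpf : forall i, s i != i by move=> i; rewrite nf.
have [u /andP[uU nu] hu] := fpf_kernel rU inv fpf.
rewrite /G (@sum_invol _ (fun b => b + u)).
- apply: big1 => b /andP[_ /eqP e]; exfalso; move/negP: nu; apply.
  by apply/eqP; apply: (@addrI _ b); rewrite addr0.
- by move=> b; rewrite -addrA addxx_mx addr0.
- by move=> b; move: uU; rewrite !inE => ??; rewrite addmx_sub.
- by move=> b _; apply: eq_bigr => i _; rewrite MfD mxE hu addr0.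
Qed.

End Parity.

Lemma addE p q (A B : 'M['F_2]_(p, q)) i j : (A + B) i j = A i j + B i j.
Proof. by rewrite mxE. Qed.

Lemma quad_D n (A : 'M['F_2]_n) c d (f : 'rV['F_2]_n -> 'F_2)
  (hf : forall x, f x = qform A x + dot c x + d) x y :
  f (x + y) + f x + f y + f 0 = (x *m (A + A^T) *m y^T) 0 0.
Proof.
rewrite !hf /qform dotDr dot0r mul0mx mul0mx raddfD /= !mulmxDl !mulmxDr !mulmxDl !addE.
rewrite (_ : (0 : 'M['F_2]_1) 0 0 = 0); last by rewrite mxE.
have -> : (y *m A *m x^T) 0 0 = (x *m A^T *m y^T) 0 0.
  have e : (y *m A *m x^T)^T = x *m A^T *m y^T by rewrite !trmx_mul trmxK mulmxA.
  by rewrite -e [in RHS]mxE.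
move: ((x *m A *m x^T) 0 0) ((x *m A *m y^T) 0 0) ((x *m A^T *m y^T) 0 0)
      ((y *m A *m y^T) 0 0) (dot c x) (dot c y) => p q r s t u; clear hf; move: d => v.
case: (F2_cases p) => ->; case: (F2_cases q) => ->; case: (F2_cases r) => ->;
case: (F2_cases s) => ->; case: (F2_cases t) => ->; case: (F2_cases u) => ->;
case: (F2_cases v) => ->; by apply/val_inj.
Qed.

Definition MF n (F : 'rV['F_2]_n -> 'rV['F_2]_n) (b : 'rV['F_2]_n) : 'M['F_2]_n :=
  \matrix_(i, j) dot b (F (delta_mx 0 i + delta_mx 0 j) + F (delta_mx 0 i)
                 + F (delta_mx 0 j) + F 0).

Section MF.
Variables (n : nat) (F : 'rV['F_2]_n -> 'rV['F_2]_n).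

Lemma MFD b b' : MF F (b + b') = MF F b + MF F b'.
Proof. by apply/matrixP => i j; rewrite !mxE dotDl. Qed.

Lemma MF_sym b i j : MF F b i j = MF F b j i.
Proof.
rewrite !mxE (addrC (delta_mx 0 j)); congr (dot b _).
by rewrite -!addrA; congr (_ + _); rewrite !addrA; congr (_ + _); rewrite addrC.
Qed.

Lemma MF_diag b i : MF F b i i = 0.
Proof. by rewrite !mxE (addxx_mx (delta_mx 0 i)) -(addrA (F 0)) (addxx_mx (F _)) addr0 addxx_mx dot0r. Qed.

Lemma MF_D (hq : quadratic_fun F) b x y :
  compF F b (x + y) + compF F b x + compF F b y + compF F b 0 = (x *m MF F b *m y^T) 0 0.
Proof.
have [A [c [d hf]]] := hq b.
have -> : MF F b = A + A^T.
  apply/matrixP => i j; rewrite mxE !dotDr; have := quad_D hf (delta_mx 0 i) (delta_mx 0 j).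
  rewrite /compF => ->; rewrite -rowE trmx_delta -colE.
  by rewrite !mxE.
exact: quad_D hf x y.
Qed.
End MF.

Lemma F2_nat_eq0 k : ((k%:R : 'F_2) == 0) = ~~ odd k.
Proof. by rewrite -(Fp_nat_mod (p:=2)) // modn2; case: (odd k). Qed.

Lemma arith m k : (k <= m)%N ->
  (3 * (2 ^ m - 1) <= (2 ^ k - 1) + (2 ^ (m.*2 - k) - 1) + (2 ^ k - 1))%N.
Proof.
move=> km; have -> : m = (k + (m - k))%N by rewrite subnKC.
set j := (m - k)%N.
have -> : ((k + j).*2 - k = k + j + j)%N by rewrite -addnn; lia.
rewrite !expnD.
have a1 : (0 < 2 ^ k)%N by rewrite expn_gt0.
have c1 : (0 < 2 ^ j)%N by rewrite expn_gt0.
move: (2 ^ k)%N (2 ^ j)%N a1 c1 => a c a1 c1.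
case: (ltngtP c 2) => [c2|c2|->]; last by nia.
  have -> : c = 1%N by lia.
  nia.
have : (1 * a <= (c - 1) * (c - 2) * a)%N by apply: leq_mul => //; nia.
nia.
Qed.

Lemma A1 k m w n : (k <= m)%N -> (0 < k)%N -> n = m.*2 -> (k + w)%N = n -> w != 0%N.
Proof. lia. Qed.
Lemma A2 r1 rc rv rw : (r1 + rc = rv + rw)%N -> rc = 0%N -> rv != 0%N -> (rv <= 1)%N -> r1 = rw.+1.
Proof. lia. Qed.
Lemma A3 k m rw n : (k <= m)%N -> n = m.*2 -> (k + rw)%N = n -> (m < rw.+1)%N.
Proof. lia. Qed.

Lemma A4 a b c : (a + b)%N = c -> b = (c - a)%N.
Proof. by move=> <-; rewrite addKn. Qed.

Section Main.
Variables (n : nat) (F : 'rV['F_2]_n -> 'rV['F_2]_n).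
Hypothesis hn : ~~ odd n.
Hypothesis hq : quadratic_fun F.

Lemma NFE b : (b \in NF F) = (b != 0) && (\det (MF F b) == 0).
Proof. by rewrite inE (bent_det (MF_D hq b) hn) negbK. Qed.

Lemma MF0 : MF F 0 = 0.
Proof. by apply/matrixP => i j; rewrite !mxE dot0l. Qed.

Lemma odd_NF p (U : 'M['F_2]_(p, n)) :
  (n./2 < \rank U)%N -> odd #|vecsG U :&: NF F|.
Proof.
move=> rU.
have n0 : (0 < n)%N.
  by have h := leq_trans rU (rank_leq_col U); exact: leq_trans (ltn0Sn _) h.
have d0 : \det (0 : 'M['F_2]_n) = 0.
  apply/eqP/det0P; exists (delta_mx 0 (Ordinal n0)); last by rewrite mulmx0.
  by apply/eqP => /matrixP/(_ 0 (Ordinal n0)); rewrite !mxE !eqxx.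
have := parity (@MFD n F) (@MF_sym n F) (@MF_diag n F) rU.
set A := vecsG U; set N := A :&: NF F.
have A0 : (0 : 'rV['F_2]_n) \in A by rewrite inE sub0mx.
have -> : \sum_(b in A) \det (MF F b) =
    \sum_(b in A) (1 + (b \in N)%:R + (b == 0)%:R).
  apply: eq_bigr => b bA; rewrite inE bA /= NFE.
  case: (eqVneq b 0) => [->|nb] /=.
    by rewrite MF0 d0 addr0; apply/val_inj.
  by case: (F2_cases (\det (MF F b))) => ->; apply/val_inj.
have S0 : \sum_(b in A) ((b == 0)%:R : 'F_2) = 1.
  by rewrite (bigD1 0) //= eqxx big1 ?addr0 // => b /andP[_ /negbTE ->].
have SN : \sum_(b in A) ((b \in N)%:R : 'F_2) = #|N|%:R.
  rewrite -sum1_card natr_sum; rewrite [RHS](bigID (fun b => b \in A)) /=.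
  rewrite [X in _ = _ + X]big1 ?addr0 => [|b /andP[bN]]; last first.
    by move: bN; rewrite /N inE => /andP[->].
  rewrite big_mkcond [RHS]big_mkcond /=; apply: eq_bigr => b _.
  by case: (b \in A); case: (b \in N).
rewrite !big_split /= sumr_const S0 SN => /eqP.
rewrite -natrD (_ : (1 : 'F_2) = 1%:R) // -natrD F2_nat_eq0 !oddD /A card_vecsG oddX /=.
have -> : (\rank U == 0) = false by apply/negbTE; rewrite -lt0n; exact: leq_ltn_trans (leq0n _) rU.
by case: (odd #|N|).
Qed.

Variables V W : 'M['F_2]_n.
Hypothesis hV : vecs V \subset NF F :|: [set 0].
Hypothesis hW : vecs W \subset NF F :|: [set 0].
Hypothesis hs : (V + W == (1%:M : 'M['F_2]_n))%MS.
Hypothesis hc : (V :&: W == (0 : 'M['F_2]_n))%MS.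

Lemma VW0 (x : 'rV['F_2]_n) : (x <= V)%MS -> (x <= W)%MS -> x = 0.
Proof.
case/andP: hc => h _ xV xW; apply/eqP; rewrite -submx0; apply: submx_trans h.
by rewrite sub_capmx xV xW.
Qed.

Lemma rankVW : (\rank V + \rank W)%N = n.
Proof.
by rewrite -mxrank_sum_cap (eqmx_rank hs) (eqmx_rank hc) mxrank1 mxrank0 addn0.
Qed.

Lemma inNF_V x : (x <= V)%MS -> x != 0 -> x \in NF F.
Proof.
move=> xV nx; have := subsetP hV x; rewrite !inE xV (negbTE nx) orbF; exact.
Qed.

Lemma inNF_W x : (x <= W)%MS -> x != 0 -> x \in NF F.
Proof.
move=> xW nx; have := subsetP hW x; rewrite !inE xW (negbTE nx) orbF; exact.
Qed.

Lemma card_vecsD0 p (X : 'M['F_2]_(p, n)) : #|vecsG X :\ 0| = (2 ^ \rank X - 1)%N.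
Proof.
by rewrite -card_vecsG (cardsD1 0 (vecsG X)) inE sub0mx add1n subn1.
Qed.

Lemma nm : n = (n./2).*2.
Proof. by rewrite -{1}(odd_double_half n) (negbTE hn) add0n. Qed.

Lemma blocking U : \rank U = (n./2).+1 -> (3 <= #|vecs U :&: NF F|)%N.
Proof.
move=> rU; change (3 <= #|vecsG U :&: NF F|)%N.
set P := (U :&: V)%MS; set Q := (U :&: W)%MS.
have rP := mxrank_sum_cap U V; have rQ := mxrank_sum_cap U W.
have r1 := rank_leq_col (U + V)%MS; have r2 := rank_leq_col (U + W)%MS.
have rVW := rankVW; have e := nm.
have r12 : (2 <= \rank P + \rank Q)%N by rewrite /P /Q; lia.
have sub : (vecsG P :\ 0) :|: (vecsG Q :\ 0) \subset vecsG U :&: NF F.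
  apply/subsetP => x; rewrite !inE /P /Q !sub_capmx.
  case/orP => /andP[nx /andP[xU xX]]; rewrite xU /=.
    by move: (inNF_V xX nx); rewrite inE.
  by move: (inNF_W xX nx); rewrite inE.
have dis : (vecsG P :\ 0) :&: (vecsG Q :\ 0) = set0.
  apply/setP => x; rewrite !inE /P /Q !sub_capmx.
  apply/negP => /andP[/andP[nx /andP[_ xV]] /andP[_ /andP[_ xW]]].
  by move: nx; rewrite (VW0 xV xW) eqxx.
have c2 : (2 <= #|vecsG U :&: NF F|)%N.
  apply: leq_trans (subset_leq_card sub).
  rewrite cardsU dis cards0 subn0 !card_vecsD0.
  have := ltn_expl (\rank P) (isT : (1 < 2)%N).
  have := ltn_expl (\rank Q) (isT : (1 < 2)%N).
  lia.
have o := odd_NF (_ : (n./2 < \rank U)%N); rewrite rU in o; have {}o := o (ltnSn _).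
move: c2 o; case: #|_| => [|[|[|k]]] //.
Qed.

Lemma add_eq0 (x y : 'rV['F_2]_n) : x + y = 0 -> x = y.
Proof. by move=> e; rewrite -[x]addr0 -(addxx_mx y) addrA e add0r. Qed.

Lemma count_aux : (\rank V <= n./2)%N -> (3 * (2 ^ n./2 - 1) <= #|NF F|)%N.
Proof.
move=> kV; set m := n./2; set k := \rank V.
have e := nm; have rVW := rankVW.
pose phi (v : 'rV['F_2]_n) := odflt 0
  [pick x in vecsG (v + W)%MS :&: NF F | (x \notin vecsG W) && (x != v)].
have key : forall v, v \in vecsG V :\ 0 ->
    [/\ phi v \in NF F, ((phi v + v)%R <= W)%MS & phi v != v].
  move=> v; rewrite in_setD1 inE => /andP[nv vV].
  rewrite /phi; case: pickP => [x /andP[/setIP[xU xN] /andP[xW xv]] | none] /=.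
    split => //; move: xU xW; rewrite !inE => /sub_addsmxP [u ex].
    rewrite ex (mx11_scalar u.1) mul_scalar_mx.
    case: (F2_cases (u.1 0 0)) => ->; first by rewrite scale0r add0r submxMl.
    by rewrite scale1r => _; rewrite addrC addrA addxx_mx add0r submxMl.
  exfalso.
  have rU : \rank (v + W)%MS = (\rank W).+1.
    apply: A2 (mxrank_sum_cap v W) _ _ (rank_leq_row v); last by rewrite mxrank_eq0.
    have : (v :&: W <= (0 : 'M['F_2]_n))%MS.
      by apply: submx_trans (capmxS vV (submx_refl W)) _; case/andP: hc.
    by rewrite submx0 -mxrank_eq0 => /eqP.
  have o := odd_NF (_ : (n./2 < \rank (v + W)%MS)%N).
  rewrite rU in o; have {}o : odd #|vecsG (v + W)%MS :&: NF F| by apply: o; exact: A3 kV e rVW.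
  have vW : v \notin vecsG W by rewrite inE; apply: contra nv => vW; rewrite (VW0 vV vW).
  have eqset : vecsG (v + W)%MS :&: NF F = v |: (vecsG W :\ 0).
    apply/setP => x; apply/idP/idP.
      move=> xUN; have := none x; rewrite xUN /= => /negbT.
      rewrite negb_and !negbK => /orP[xW|/eqP ->]; last by rewrite setU11.
      rewrite in_setU1 in_setD1 xW andbT; apply/orP; right.
      by move: xUN => /setIP[_]; rewrite NFE => /andP[].
    rewrite in_setU1 in_setD1 => /orP[/eqP -> | /andP[nx xW]]; rewrite in_setI.
      by rewrite inE addsmxSl inNF_V.
    move: xW; rewrite inE => xW.
    by rewrite inE (submx_trans xW (addsmxSr _ _)) inNF_W.
  move: o; have vW' : v \notin vecsG W :\ 0 by rewrite in_setD1 (negbTE vW) andbF.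
  rewrite eqset cardsU1 vW' card_vecsD0 add1n subn1 prednK ?expn_gt0 //.
  have kv : (0 < k)%N.
    rewrite lt0n mxrank_eq0; apply: contra nv => /eqP V0; by move: vV; rewrite V0 submx0.
  rewrite oddX /=; have : \rank W != 0%N.
    exact: A1 kV kv e rVW.
  by move=> /negbTE ->.
set S1 := vecsG V :\ 0; set S2 := vecsG W :\ 0; set S3 := phi @: S1.
have hS1 : S1 \subset NF F.
  by apply/subsetP => x; rewrite in_setD1 inE => /andP[nx xV]; exact: inNF_V.
have hS2 : S2 \subset NF F.
  by apply/subsetP => x; rewrite in_setD1 inE => /andP[nx xW]; exact: inNF_W.
have hS3 : S3 \subset NF F.
  by apply/subsetP => y /imsetP[v vS ->]; case: (key v vS).
have d12 : S1 :&: S2 = set0.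
  apply/setP => x; rewrite in_setI !in_setD1 !inE.
  apply/negbTE/negP => /andP[/andP[nx xV] /andP[_ xW]].
  by rewrite (VW0 xV xW) eqxx in nx.
have d3 : (S1 :|: S2) :&: S3 = set0.
  apply/setP => y; rewrite in_setI in_set0; apply/negbTE/negP => /andP[yS /imsetP[v vS ey]].
  case: (key v vS) => _; rewrite -ey => yvW nyv.
  move: (vS); rewrite in_setD1 inE => /andP[nv vV].
  move: yS; rewrite in_setU !in_setD1 !inE => /orP[/andP[_ yV] | /andP[_ yW]].
    have := VW0 (addmx_sub yV vV) yvW => /add_eq0 yv.
    by rewrite yv eqxx in nyv.
  have : (((y + v) + y)%R <= W)%MS by rewrite addmx_sub.
  rewrite addrC addrA addxx_mx add0r => vW.
  by rewrite (VW0 vV vW) eqxx in nv.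
have c3 : #|S3| = #|S1|.
  apply: card_in_imset => v1 v2 v1S v2S e12.
  case: (key v1 v1S) => _ h1 _; case: (key v2 v2S) => _ h2 _; rewrite e12 in h1.
  have : (((phi v2 + v1) + (phi v2 + v2))%R <= W)%MS by rewrite addmx_sub.
  rewrite addrACA addxx_mx add0r => hW12.
  move: v1S v2S; rewrite !in_setD1 !inE => /andP[_ v1V] /andP[_ v2V].
  exact: add_eq0 (VW0 (addmx_sub v1V v2V) hW12).
have cU : #|S1 :|: S2 :|: S3| = (#|S1| + #|S2| + #|S3|)%N.
  by rewrite cardsU d3 cards0 subn0 cardsU d12 cards0 subn0.
have sub : S1 :|: S2 :|: S3 \subset NF F by rewrite !subUset hS1 hS2 hS3.
apply: leq_trans (subset_leq_card sub).
have rW : \rank W = (n - k)%N by apply: A4 rVW.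
rewrite cU c3 /S1 /S2 !card_vecsD0 rW -/k.
by have := arith kV; rewrite -e.
Qed.

End Main.

Lemma A5 a b m n : (a + b)%N = n -> n = m.*2 -> (m < a)%N -> (b <= m)%N.
Proof. lia. Qed.

Theorem mainTheorem19 (n : nat) (F : 'rV['F_2]_n -> 'rV['F_2]_n) (V W : 'M['F_2]_n) :
  ~~ odd n ->
  quadratic_fun F ->
  vecs V \subset NF F :|: [set 0] ->
  vecs W \subset NF F :|: [set 0] ->
  (V + W == (1%:M : 'M['F_2]_n))%MS -> (V :&: W == (0 : 'M['F_2]_n))%MS ->
  (3 * (2 ^ n./2 - 1) <= #|NF F|)%N /\
  (forall U : 'M['F_2]_n, \rank U = (n./2).+1 -> (3 <= #|vecs U :&: NF F|)%N).
Proof.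
move=> hn hq hV hW hs hc; split; last first.
  by move=> U rU; exact: (blocking hn hq hV hW hs hc rU).
case: (leqP (\rank V) n./2) => kV; first exact: (count_aux hn hq hV hW hs hc kV).
have hs' : (W + V == (1%:M : 'M['F_2]_n))%MS by rewrite addsmxC.
have hc' : (W :&: V == (0 : 'M['F_2]_n))%MS by rewrite capmxC.
apply: (count_aux hn hq hW hV hs' hc').
exact: A5 (rankVW hs hc) (nm hn) kV.
Qed.
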